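(* Let $M_1,\dots,M_n \in \mathbb{R}^{a\times b}$, $\lambda\ge 0$, $r_1\le a$, $r_2 \le b$, let $D\in\mathbb{R}^{a\times a}$ be the cyclic second-difference matrix defined in the context, and let $A = I + \lambda D^\top D \in \mathbb{R}^{a\times a}$. Then the problem $$\max_{\substack{L\in\mathbb{R}^{a\times r_1},\ R\in\mathbb{R}^{b\times r_2}\\ L^\top L = I,\ R^\top R = I}} \sum_{i=1}^n \operatorname{Tr}\!\Big( L (I + \lambda L^\top D^\top D L)^{-1} L^\top M_i R R^\top M_i^\top\Big)$$ is equivalent to the problem $$\max_{\substack{U\in\mathbb{R}^{a\times r_1},\ R\in\mathbb{R}^{b\times r_2}\\ U^\top U = I,\ R^\top R = I}} \sum_{i=1}^n \operatorname{Tr}\!\Big( U U^\top A^{-1/2} M_i R R^\top M_i^\top A^{-1/2}\Big),$$ where $U$ and $L$ correspond via $U$ being the matrix of left singular vectors in a thin SVD $A^{1/2}L = U \Sigma V^\top$ (so the two objectives coincide), and the column space of $L$ equals the column space of $A^{-1/2}U$.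
   Context: $D\in\mathbb{R}^{a\times a}$ is the cyclic second-difference matrix: $D_{jj} = 2$ for all $j$, $D_{j,j+1} = D_{j+1,j} = -1$ for $j=1,\dots,a-1$, $D_{1a} = D_{a1} = -1$, and all other entries are $0$. $A^{1/2}$ and $A^{-1/2}$ denote the symmetric positive definite square root of $A$ and its inverse. $\operatorname{Tr}$ denotes the trace. *)

(* Defs.v *)
From mathcomp Require Import all_boot all_order all_algebra.
Set Implicit Arguments. Unset Strict Implicit. Unset Printing Implicit Defensive.
Import Order.TTheory GRing.Theory Num.Theory.
Local Open Scope ring_scope.

(* Cyclic second-difference matrix: 2 on the diagonal, -1 on the (cyclic)
   super/sub-diagonals, 0 elsewhere.  The diagonal takes priority (only
   relevant for the degenerate case a = 1). *)
Definition cycD (R : ringType) (a : nat) : 'M[R]_a :=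
  \matrix_(i < a, j < a)
    if i == j then 2
    else if (((i.+1 %% a)%N == j) || ((j.+1 %% a)%N == i)) then -1 else 0.

Definition Amat (R : ringType) (a : nat) (lam : R) : 'M[R]_a :=
  1%:M + lam *: ((cycD R a)^T *m cycD R a).

Definition sym_posdef (R : numDomainType) (a : nat) (S : 'M[R]_a) : Prop :=
  S^T = S /\ forall v : 'cV[R]_a, v != 0 -> 0 < (v^T *m S *m v) 0 0.

Definition objL (R : fieldType) (a b n r1 r2 : nat) (M : 'I_n -> 'M[R]_(a, b))
  (lam : R) (L : 'M[R]_(a, r1)) (Rm : 'M[R]_(b, r2)) : R :=
  \sum_(i < n) \tr (L *m invmx (1%:M + lam *: (L^T *m (cycD R a)^T *m cycD R a *m L))
                      *m L^T *m M i *m Rm *m Rm^T *m (M i)^T).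

(* second objective: sum_i Tr(U U^T A^{-1/2} M_i R R^T M_i^T A^{-1/2}),
   where Sinv stands for A^{-1/2} *)
Definition objU (R : fieldType) (a b n r1 r2 : nat) (M : 'I_n -> 'M[R]_(a, b))
  (Sinv : 'M[R]_a) (U : 'M[R]_(a, r1)) (Rm : 'M[R]_(b, r2)) : R :=
  \sum_(i < n) \tr (U *m U^T *m Sinv *m M i *m Rm *m Rm^T *m (M i)^T *m Sinv).

Definition thin_svd (R : numDomainType) (a r : nat) (X : 'M[R]_(a, r))
  (U : 'M[R]_(a, r)) (Sig : 'M[R]_r) (V : 'M[R]_r) : Prop :=
  U^T *m U = 1%:M /\ V^T *m V = 1%:M /\
  (exists s : 'rV[R]_r, Sig = diag_mx s /\ forall j, 0 <= s 0 j) /\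
  X = U *m Sig *m V^T.

Definition colspace_eq (R : fieldType) (a r1 r2 : nat)
  (X : 'M[R]_(a, r1)) (Y : 'M[R]_(a, r2)) : Prop :=
  (X^T == Y^T)%MS.

(* Main.v *)
Require Import Defs.
From mathcomp Require Import all_boot all_order all_algebra.
From mathcomp Require Import complex ring lra.
Set Implicit Arguments. Unset Strict Implicit. Unset Printing Implicit Defensive.
Import Order.TTheory GRing.Theory Num.Theory.
Local Open Scope ring_scope.

Lemma creD {R : rcfType} (u w : R[i]) : (@complex.Re R) (u + w) = (@complex.Re R) u + (@complex.Re R) w.
Proof. by case: u; case: w. Qed.
Lemma cimD {R : rcfType} (u w : R[i]) : (@complex.Im R) (u + w) = (@complex.Im R) u + (@complex.Im R) w.
Proof. by case: u; case: w. Qed.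
Lemma cre0 {R : rcfType} : (@complex.Re R) 0 = 0. Proof. by []. Qed.
Lemma cim0 {R : rcfType} : (@complex.Im R) 0 = 0. Proof. by []. Qed.
Lemma creM {R : rcfType} (u w : R[i]) : (@complex.Re R) (u * w) = (@complex.Re R) u * (@complex.Re R) w - (@complex.Im R) u * (@complex.Im R) w.
Proof. by case: u => a b; case: w => c d. Qed.
Lemma cimM {R : rcfType} (u w : R[i]) : (@complex.Im R) (u * w) = (@complex.Re R) u * (@complex.Im R) w + (@complex.Im R) u * (@complex.Re R) w.
Proof. by case: u => a b; case: w => c d. Qed.
Lemma cre_real {R : rcfType} (b : R) : (@complex.Re R) (real_complex R b) = b. Proof. by []. Qed.
Lemma cim_real {R : rcfType} (b : R) : (@complex.Im R) (real_complex R b) = 0. Proof. by []. Qed.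
Lemma cre_sum {R : rcfType} I (r : seq I) P (F : I -> R[i]) :
  (@complex.Re R) (\sum_(i <- r | P i) F i) = \sum_(i <- r | P i) (@complex.Re R) (F i).
Proof. exact: (big_morph _ creD cre0). Qed.
Lemma cim_sum {R : rcfType} I (r : seq I) P (F : I -> R[i]) :
  (@complex.Im R) (\sum_(i <- r | P i) F i) = \sum_(i <- r | P i) (@complex.Im R) (F i).
Proof. exact: (big_morph _ cimD cim0). Qed.

Lemma tr11 {R : rcfType} (M : 'M[R]_1) : M^T = M.
Proof. by apply/matrixP => i j; rewrite !ord1 mxE. Qed.

Lemma sumsq_eq0 {R : rcfType} n (x : 'rV[R]_n) : (x *m x^T) 0 0 = 0 -> x = 0.
Proof.
rewrite mxE => h; apply/rowP => j; rewrite mxE.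
have hp : forall k, xpredT k -> 0 <= x 0 k * x^T k 0.
  by move=> k _; rewrite mxE -expr2 sqr_ge0.
have := @psumr_eq0P _ _ xpredT (fun k => x 0 k * x^T k 0) hp h j isT.
by rewrite mxE => /eqP; rewrite mulf_eq0 orbb => /eqP.
Qed.

Lemma sumsq_ge0 {R : rcfType} n (x : 'rV[R]_n) : 0 <= (x *m x^T) 0 0.
Proof. by rewrite mxE; apply: sumr_ge0 => k _; rewrite mxE -expr2 sqr_ge0. Qed.

Lemma sym_real_eig {R : rcfType} n (B : 'M[R]_n.+1) : B^T = B ->
  exists a (x : 'rV[R]_n.+1), x != 0 /\ x *m B = a *: x.
Proof.
move=> Bsym.
pose BC := map_mx (real_complex R) B.
have [l /eigenvalueP [v hv vn0]] := eigenvalue_closed BC (ltn0Sn n).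
pose x := map_mx (@complex.Re R) v; pose y := map_mx (@complex.Im R) v.
pose al := (@complex.Re R) l; pose be := (@complex.Im R) l.
have hx : x *m B = al *: x - be *: y.
  apply/rowP => j; have := congr1 (fun M : 'M[R[i]]_(1, n.+1) => (@complex.Re R) (M 0 j)) hv.
  rewrite !mxE cre_sum /= creM => <-; apply: eq_bigr => k _.
  by rewrite !mxE creM cre_real cim_real mulr0 subr0.
have hy : y *m B = be *: x + al *: y.
  apply/rowP => j; have := congr1 (fun M : 'M[R[i]]_(1, n.+1) => (@complex.Im R) (M 0 j)) hv.
  rewrite !mxE cim_sum /= cimM => e; rewrite addrC -e.
  apply: eq_bigr => k _.
  by rewrite !mxE cimM cre_real cim_real mulr0 add0r.
have e3 : y *m x^T = x *m y^T by rewrite -[LHS]tr11 trmx_mul trmxK.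
have e1 : x *m B *m y^T = y *m B *m x^T.
  by rewrite -[LHS]tr11 !trmx_mul trmxK Bsym mulmxA.
rewrite hx hy mulmxBl mulmxDl -!scalemxAl e3 in e1.
pose c := (x *m y^T) 0 0; pose p := (x *m x^T) 0 0; pose q := (y *m y^T) 0 0.
have e4 : al * c - be * q = be * p + al * c.
  by have := congr1 (fun M : 'M[R]_1 => M 0 0) e1; rewrite /c /p /q !mxE.
have e5 : be * (p + q) = 0.
  rewrite (_ : be * (p + q) = -((al * c - be * q) - (be * p + al * c))); last by ring.
  by rewrite e4 subrr oppr0.
have v0 : x = 0 -> y = 0 -> v = 0.
  move=> hx0 hy0; apply/rowP => j.
  have := congr1 (fun M : 'M[R]_(1, n.+1) => M 0 j) hx0.
  have := congr1 (fun M : 'M[R]_(1, n.+1) => M 0 j) hy0.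
  rewrite /= !mxE; case: (v 0 j) => a b /= -> -> //.
have be0 : be = 0.
  move: e5 => /eqP; rewrite mulf_eq0 => /orP [/eqP //|].
  rewrite paddr_eq0 ?sumsq_ge0 // => /andP [/eqP /sumsq_eq0 hx0 /eqP /sumsq_eq0 hy0].
  by move: vn0; rewrite (v0 hx0 hy0) eqxx.
rewrite be0 scale0r subr0 in hx; rewrite be0 scale0r add0r in hy.
have [x0|xn0] := eqVneq x 0.
  exists al, y; split => //; apply: contraNneq vn0 => y0; by rewrite (v0 x0 y0).
by exists al, x.
Qed.
Lemma householder {R : rcfType} n (u : 'rV[R]_n.+1) : u *m u^T = 1%:M ->
  exists H : 'M[R]_n.+1, H^T = H /\ H *m H = 1%:M /\ row 0 H = u.
Proof.
move=> uu.
pose e : 'rV[R]_n.+1 := 'e_0.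
pose w := u - e.
have [w0|wn0] := eqVneq w 0.
  exists 1%:M; split; first by rewrite trmx1.
  split; first exact: mulmx1.
  by rewrite row1; apply/eqP; rewrite eq_sym -subr_eq0 -/w w0.
pose t := (w *m w^T) 0 0.
have tn0 : t != 0 by apply: contraNneq wn0 => /sumsq_eq0 ->.
have ee : e *m e^T = 1%:M.
  by rewrite [LHS]mx11_scalar !mxE (bigD1 0) //= big1 => [|j /negPf jn0]; rewrite !mxE ?jn0 ?eqxx ?mulr0 //= addr0 mulr1.
have ue : (u *m e^T) = (u 0 0)%:M.
  rewrite [LHS]mx11_scalar; congr (_%:M). rewrite !mxE (bigD1 0) //= big1 => [|j /negPf jn0]; rewrite !mxE ?jn0 ?eqxx ?mulr0 //= addr0 mulr1.
  by [].
have eu : (e *m u^T) = (u 0 0)%:M by rewrite -[LHS]trmxK trmx_mul trmxK ue tr_scalar_mx.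
have ww : w *m w^T = t%:M by rewrite [LHS]mx11_scalar.
have tE : t = 2 - 2 * u 0 0.
  have := congr1 (fun M : 'M[R]_1 => M 0 0) ww.
  rewrite /w linearB /= mulmxBl !mulmxBr uu ue eu ee !mxE /= !mulr1n => <-. ring.
pose k := 2 / t.
have WW : (w^T *m w) *m (w^T *m w) = t *: (w^T *m w).
  by rewrite mulmxA -(mulmxA w^T) ww mul_mx_scalar -scalemxAl.
move: WW; set W := w^T *m w => WW.
exists (1%:M - k *: W); split.
  by rewrite linearB linearZ /= trmx1 /W trmx_mul trmxK.
split.
  rewrite mulmxBl !mulmxBr mulmx1 mul1mx -!scalemxAl -!scalemxAr WW !scalerA.
  rewrite mulmx1 -scalerBl -addrA -!scaleNr -scalerDl.
  have -> : - k + - (k - k * k * t) = 0.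
    by rewrite /k; field.
  by rewrite scale0r addr0.
rewrite rowE mulmxBr mulmx1 -scalemxAr /W mulmxA.
have -> : 'e_0 *m w^T = (u 0 0 - 1)%:M.
  by rewrite /w linearB /= mulmxBr -/e eu ee raddfB.
rewrite mul_scalar_mx scalerA.
have -> : k * (u 0 0 - 1) = -1.
  rewrite /k tE; field.
  by rewrite -tE.
by rewrite scaleN1r opprK /w addrC subrK.
Qed.
Lemma spectral_sym {R : rcfType} n (B : 'M[R]_n) : B^T = B ->
  exists (V : 'M[R]_n) (d : 'rV[R]_n), V *m V^T = 1%:M /\ V *m B *m V^T = diag_mx d.
Proof.
elim: n B => [|n IH] B Bsym.
  by exists 1%:M, 0; split; apply/matrixP => -[].
have [a [x [xn0 hx]]] := sym_real_eig Bsym.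
pose t := (x *m x^T) 0 0.
have tgt0 : 0 < t.
  rewrite lt_def sumsq_ge0 andbT; apply: contraNneq xn0 => /sumsq_eq0 ->; exact: eqxx.
pose u := (Num.sqrt t)^-1 *: x.
have uu : u *m u^T = 1%:M.
  rewrite /u linearZ /= -scalemxAl -scalemxAr scalerA [x *m x^T]mx11_scalar -/t.
  rewrite scale_scalar_mx; congr (_%:M).
  by rewrite -invfM -expr2 sqr_sqrtr ?ltW // mulVf // gt_eqF.
have hu : u *m B = a *: u by rewrite /u -scalemxAl hx !scalerA mulrC.
have [H [Hs [HH Hr]]] := householder uu.
pose C := H *m B *m H.
have Cs : C^T = C by rewrite /C !trmx_mul Hs Bsym mulmxA.
have rC : row 0 C = a *: 'e_0.
  by rewrite /C !row_mul Hr hu -scalemxAl -Hr -row_mul HH row1.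
have rC' : forall k, C 0 k = a * (k == 0)%:R.
  move=> k; have := congr1 (fun M : 'M[R]_(1, n.+1) => M 0 k) rC.
  by rewrite !mxE eqxx /= eq_sym.
have CE : C = H *m B *m H by [].
clearbody C.
pose C' : 'M[R]_(1 + n) := C.
pose B' := drsubmx C'.
have ur : ursubmx C' = 0.
  apply/matrixP => i j; rewrite !mxE.
  have -> : lshift n i = 0 by apply/val_inj; rewrite /= ord1.
  rewrite /C' rC' (_ : (rshift 1 j == 0) = false) ?mulr0 //.
have dl : dlsubmx C' = 0 by rewrite -[dlsubmx C']trmxK trmx_dlsub Cs ur trmx0.
have ul : ulsubmx C' = a%:M.
  apply/matrixP => i j; rewrite !mxE !ord1 /=.
  have -> : lshift n (0 : 'I_1) = 0 by apply/val_inj.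

  by rewrite /C' rC' eqxx mulr1.
have B's : B'^T = B' by rewrite /B' trmx_drsub Cs.
have [V' [d' [hV1 hV2]]] := IH B' B's.
pose blk : 'M[R]_(1 + n) := block_mx 1%:M 0 0 V'.
pose H' : 'M[R]_(1 + n) := H.
pose B'' : 'M[R]_(1 + n) := B.
have HH' : H' *m H' = 1%:M := HH.
have Hs' : H'^T = H' := Hs.
have CE' : C' = H' *m B'' *m H' := CE.
have G1 : blk *m H' *m (blk *m H')^T = 1%:M.
  rewrite trmx_mul Hs' mulmxA -(mulmxA blk H' H') HH' mulmx1 /blk tr_block_mx mulmx_block.
  by rewrite !trmx0 trmx1 !mulmx0 !mul0mx mulmx1 !add0r !addr0 hV1 -scalar_mx_block.
have G2 : blk *m H' *m B'' *m (blk *m H')^T = diag_mx (row_mx (a%:M : 'rV_1) d').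
  have -> : blk *m H' *m B'' *m (blk *m H')^T = blk *m C' *m blk^T.
    by rewrite CE' trmx_mul Hs' !mulmxA.
  rewrite -[C']submxK ur dl ul /blk tr_block_mx !mulmx_block.
  rewrite !trmx0 trmx1 ?mulmx0 ?mul0mx ?mulmx1 ?mul1mx ?mulmx0 ?mul0mx ?addr0 ?add0r.
  rewrite mul0mx.
  rewrite diag_mx_row -/B' hV2; congr block_mx.
  by apply/matrixP => i j; rewrite !ord1 !mxE.
by exists (blk *m H'), (row_mx (a%:M : 'rV_1) d'); split; [exact G1 | exact G2].
Qed.
Lemma mul_entry {R : rcfType} m k p (M : 'M[R]_(m, k)) (N : 'M[R]_(k, p)) i j :
  (M *m N) i j = (row i M *m col j N) 0 0.
Proof. by rewrite !mxE; apply: eq_bigr => l _; rewrite !mxE. Qed.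

Lemma svd_exists {R : rcfType} a r (X : 'M[R]_(a, r)) :
  (forall c : 'cV_r, X *m c = 0 -> c = 0) ->
  exists (U : 'M[R]_(a, r)) (Sig V : 'M[R]_r), thin_svd X U Sig V.
Proof.
move=> Xfull.
have Bs : (X^T *m X)^T = X^T *m X by rewrite trmx_mul trmxK.
have [W [d [hW1 hW2]]] := spectral_sym Bs.
have hW1' : W^T *m W = 1%:M := mulmx1C hW1.
have dpos : forall j, 0 < d 0 j.
  move=> j.
  have dE : d 0 j = ((X *m (row j W)^T)^T *m (X *m (row j W)^T)^T^T) 0 0.
    have := congr1 (fun M : 'M[R]_r => M j j) hW2.
    rewrite /= [in RHS]mxE eqxx mulr1n => <-.
    by rewrite mul_entry row_mul -tr_row trmxK !trmx_mul trmxK !mulmxA.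
  rewrite dE lt_def sumsq_ge0 andbT.
  apply/negP => /eqP /sumsq_eq0 /(congr1 trmx); rewrite trmxK trmx0 => /Xfull.
  move=> /(congr1 trmx); rewrite trmxK trmx0 => w0.
  have := congr1 (fun M : 'M[R]_r => M j j) hW1.
  by rewrite /= mul_entry -tr_row w0 mul0mx !mxE eqxx /= => /eqP; rewrite eq_sym oner_eq0.
pose s := \row_j Num.sqrt (d 0 j).
pose si := \row_j (s 0 j)^-1.
have sgt0 : forall j, 0 < s 0 j by move=> j; rewrite mxE sqrtr_gt0.
have ssi : diag_mx si *m diag_mx s = 1%:M.
  rewrite mulmx_diag; apply/matrixP => i j; rewrite !mxE.
  case: eqP => [->|]; rewrite ?mulr1n ?mulr0n //.
  by have := sgt0 j; rewrite mxE => h; rewrite mulVf // gt_eqF.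
exists (X *m W^T *m diag_mx si), (diag_mx s), W^T; split; last split; last split.
- have -> : (X *m W^T *m diag_mx si)^T *m (X *m W^T *m diag_mx si) = diag_mx si *m (W *m (X^T *m X) *m W^T) *m diag_mx si.
    by rewrite !trmx_mul trmxK tr_diag_mx !mulmxA.
  rewrite hW2 !mulmx_diag.
  apply/matrixP => i j; rewrite !mxE.
  case: eqP => [->|]; rewrite ?mulr1n ?mulr0n //.
  have q0 : Num.sqrt (d 0 j) != 0 by rewrite gt_eqF // sqrtr_gt0.
  by rewrite -{2}(sqr_sqrtr (ltW (dpos j))) expr2 mulrA mulVf // mul1r mulfV.
- by rewrite trmxK.
- by exists s; split => // j; rewrite mxE sqrtr_ge0.
- by rewrite -!mulmxA (mulmxA (diag_mx si)) ssi mul1mx trmxK hW1' mulmx1.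
Qed.

Lemma S_unit {R : rcfType} a (S : 'M[R]_a) : sym_posdef S -> S \in unitmx.
Proof.
move=> [Ss Spd]; rewrite unitmxE unitfE; apply/negP => /det0P [v vn0 vS].
have h : v^T != 0.
  by apply: contraNneq vn0 => /(congr1 trmx); rewrite trmxK trmx0 => ->.
by have := Spd _ h; rewrite trmxK vS mul0mx mxE ltxx.
Qed.

Lemma K_unit {R : rcfType} a r (X U : 'M[R]_(a, r)) (K : 'M[R]_r) :
  (forall c : 'cV_r, X *m c = 0 -> c = 0) -> X = U *m K -> K \in unitmx.
Proof.
move=> Xf XE; rewrite -unitmx_tr unitmxE unitfE; apply/negP => /det0P [v vn0 vK].
have : X *m v^T = 0 by rewrite XE -mulmxA -[K *m v^T]trmxK trmx_mul trmxK vK trmx0 mulmx0.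
move/Xf; move/(congr1 trmx); rewrite trmxK trmx0 => v0.
by move: vn0; rewrite v0 eqxx.
Qed.

Lemma key_eq {R : rcfType} a r (lam : R) (S : 'M[R]_a) (U L : 'M[R]_(a, r)) (K : 'M[R]_r) :
  S^T = S -> S \in unitmx -> S *m S = Amat a lam -> U^T *m U = 1%:M -> K \in unitmx ->
  L = invmx S *m U *m K -> L^T *m L = 1%:M ->
  L *m invmx (1%:M + lam *: (L^T *m (cycD R a)^T *m cycD R a *m L)) *m L^T
  = invmx S *m U *m U^T *m invmx S.
Proof.
move=> Ss Su SS UU Ku LE LL.
set D := cycD R a.
have Sis : (invmx S)^T = invmx S by rewrite trmx_inv Ss.
have -> : 1%:M + lam *: (L^T *m D^T *m D *m L) = L^T *m (S *m S) *m L.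
  rewrite SS /Amat -/D mulmxDr mulmxDl mulmx1 LL -scalemxAr -scalemxAl !mulmxA.
  by [].
have -> : L^T *m (S *m S) *m L = K^T *m K.
  rewrite LE !trmx_mul Sis.
  have -> : K^T *m (U^T *m invmx S) *m (S *m S) *m (invmx S *m U *m K)
     = K^T *m U^T *m (invmx S *m S) *m (S *m invmx S) *m U *m K by rewrite !mulmxA.
  by rewrite mulVmx // mulmxV // !mulmx1 -(mulmxA K^T) UU mulmx1.
have Pu : K^T *m K \in unitmx by rewrite unitmx_mul unitmx_tr Ku.
have iP : invmx (K^T *m K) = invmx K *m invmx K^T.
  rewrite -[RHS]mulmx1 -(mulmxV Pu) mulmxA.
  have -> : invmx K *m invmx K^T *m (K^T *m K) = 1%:M.
    by rewrite -mulmxA (mulmxA (invmx K^T)) mulVmx ?unitmx_tr // mul1mx mulVmx.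
  by rewrite mul1mx.
rewrite iP LE !trmx_mul Sis.
have -> : invmx S *m U *m K *m (invmx K *m invmx K^T) *m (K^T *m (U^T *m invmx S))
   = invmx S *m U *m (K *m invmx K) *m (invmx K^T *m K^T) *m U^T *m invmx S by rewrite !mulmxA.
by rewrite mulmxV // mulVmx ?unitmx_tr // !mulmx1.
Qed.

Lemma obj_eq {R : rcfType} a b n r1 r2 (M : 'I_n -> 'M[R]_(a, b)) (lam : R)
  (S : 'M[R]_a) (U L : 'M[R]_(a, r1)) (K : 'M[R]_r1) (Rm : 'M[R]_(b, r2)) :
  S^T = S -> S \in unitmx -> S *m S = Amat a lam -> U^T *m U = 1%:M -> K \in unitmx ->
  L = invmx S *m U *m K -> L^T *m L = 1%:M ->
  objL M lam L Rm = objU M (invmx S) U Rm.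
Proof.
move=> Ss Su SS UU Ku LE LL; rewrite /objL /objU; apply: eq_bigr => i _.
rewrite (key_eq Ss Su SS UU Ku LE LL).
by rewrite -!mulmxA mxtrace_mulC !mulmxA.
Qed.

Lemma col_eq {R : rcfType} a r (S : 'M[R]_a) (U L : 'M[R]_(a, r)) (K : 'M[R]_r) :
  K \in unitmx -> L = invmx S *m U *m K -> colspace_eq L (invmx S *m U).
Proof.
move=> Ku LE; rewrite /colspace_eq LE trmx_mul; apply/eqmxP.
by apply: eqmxMfull; rewrite row_full_unit unitmx_tr.
Qed.
Theorem proposition2 (R : rcfType) (a b n r1 r2 : nat)
  (M : 'I_n -> 'M[R]_(a, b)) (lam : R) :
  0 <= lam -> (r1 <= a)%N -> (r2 <= b)%N ->
  forall S : 'M[R]_a, (* S = A^{1/2}, invmx S = A^{-1/2} *)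
  sym_posdef S -> S *m S = Amat a lam ->
  (* every feasible L admits a thin SVD of A^{1/2} L *)
  (forall L : 'M[R]_(a, r1), L^T *m L = 1%:M ->
     exists (U : 'M[R]_(a, r1)) (Sig V : 'M[R]_r1), thin_svd (S *m L) U Sig V) /\
  (* for any such SVD, the objectives coincide and col(L) = col(A^{-1/2} U) *)
  (forall (L U : 'M[R]_(a, r1)) (Sig V : 'M[R]_r1),
     L^T *m L = 1%:M -> thin_svd (S *m L) U Sig V ->
     (forall Rm : 'M[R]_(b, r2), Rm^T *m Rm = 1%:M ->
        objL M lam L Rm = objU M (invmx S) U Rm) /\
     colspace_eq L (invmx S *m U)) /\
  (* conversely every feasible U corresponds to a feasible L *)
  (forall U : 'M[R]_(a, r1), U^T *m U = 1%:M ->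
     exists L : 'M[R]_(a, r1),
       L^T *m L = 1%:M /\ colspace_eq L (invmx S *m U) /\
       (forall Rm : 'M[R]_(b, r2), Rm^T *m Rm = 1%:M ->
          objL M lam L Rm = objU M (invmx S) U Rm)).
Proof.
move=> lam0 r1a r2b S Spd SS.
have Su := S_unit Spd.
have Ss := proj1 Spd.
split.
  move=> L LL; apply: svd_exists => c hc.
  have Lc : L *m c = 0 by rewrite -(mulKmx Su (L *m c)) (mulmxA S) hc mulmx0.
  by rewrite -[c]mul1mx -LL -mulmxA Lc mulmx0.
split.
  move=> L U Sig V LL [UU [VV [_ XE]]].
  have Xf : forall c : 'cV_r1, S *m L *m c = 0 -> c = 0.
    move=> c hc.
    have Lc : L *m c = 0 by rewrite -(mulKmx Su (L *m c)) (mulmxA S) hc mulmx0.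
    by rewrite -[c]mul1mx -LL -mulmxA Lc mulmx0.
  have Ku : (Sig *m V^T) \in unitmx.
    by apply: (@K_unit _ _ _ _ U _ Xf); rewrite mulmxA.
  have LE : L = invmx S *m U *m (Sig *m V^T).
    by rewrite -[L](mulKmx Su) XE !mulmxA.
  split; last exact: col_eq Ku LE.
  by move=> Rm _; apply: obj_eq Ss Su SS UU Ku LE LL.
move=> U UU.
have Xf : forall c : 'cV_r1, invmx S *m U *m c = 0 -> c = 0.
  move=> c hc.
  have Uc : U *m c = 0 by rewrite -(mulKVmx Su (U *m c)) (mulmxA (invmx S)) hc mulmx0.
  by rewrite -[c]mul1mx -UU -mulmxA Uc mulmx0.
have [U' [Sig [V [UU' [VV [_ XE]]]]]] := svd_exists Xf.
have Ku : (Sig *m V^T) \in unitmx.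
  by apply: (@K_unit _ _ _ _ U' _ Xf); rewrite mulmxA.
have VV' : V *m V^T = 1%:M := mulmx1C VV.
have Vu : V^T \in unitmx by case: (mulmx1_unit VV).
have K'u : (invmx (Sig *m V^T) *m V^T) \in unitmx by rewrite unitmx_mul unitmx_inv Ku.
have LE : U' *m V^T = invmx S *m U *m (invmx (Sig *m V^T) *m V^T).
  by rewrite mulmxA XE -(mulmxA U') mulmxK.
have LL : (U' *m V^T)^T *m (U' *m V^T) = 1%:M.
  by rewrite trmx_mul trmxK mulmxA -(mulmxA V) UU' mulmx1 VV'.
exists (U' *m V^T); split => //; split; first exact: col_eq K'u LE.
by move=> Rm _; apply: obj_eq Ss Su SS UU K'u LE LL.
Qed.
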